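(* Let $\eta\in(0,1)$ and, for $N_S>0$ and $\xi\in[0,1]$, let $$I(\xi;N_S)=4N_S\left\{\frac{1-\xi}{1-2\eta^2\left(\sqrt{\xi N_S(1+\xi N_S)}-\xi N_S\right)}+\frac{\xi\left[(1-\eta^2)^2+\eta^4\right]}{(1-\eta^2)\left(1+2\xi N_S\eta^2(1-\eta^2)\right)}\right\}.$$ Let $f_1(\eta,N_S)=\frac{1}{4N_S}\,\partial_\xi I(\xi;N_S)\big|_{\xi=1}$. If $\eta>1/\sqrt2$, then $N_S\mapsto f_1(\eta,N_S)$ has exactly one zero $\bar N_S^{(0)}(\eta)$ on $(0,\infty)$. Define $\bar N_S(\eta)=0$ if $\eta\le 1/\sqrt2$ and $\bar N_S(\eta)=\bar N_S^{(0)}(\eta)$ if $\eta>1/\sqrt2$. Then, for every $N_S>0$, $\xi=1$ is a maximizer of $\xi\mapsto I(\xi;N_S)$ over $[0,1]$ if and only if $N_S\le\bar N_S(\eta)$.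
   Context: $I(\xi;N_S)$ is the quantum Fisher information for estimating the transmission $\eta$ of a pure-loss (zero-temperature, $N_B=0$) bosonic channel $a\mapsto\eta a+\sqrt{1-\eta^2}\,v$ ($v$ vacuum), using a single-mode pure displaced squeezed state with total mean photon number $N_S$, of which $\xi N_S$ photons are in squeezing and $(1-\xi)N_S$ in displacement (displacement along the optimal angle). $\xi=1$ is the squeezed-vacuum state, $\xi=0$ the coherent state. *)

(* Defs.v *)
From Stdlib Require Import Reals.
From Coquelicot Require Import Coquelicot.
Open Scope R_scope.

Definition QFI (eta NS xi : R) : R :=
  4 * NS *
  ( (1 - xi) / (1 - 2 * eta ^ 2 * (sqrt (xi * NS * (1 + xi * NS)) - xi * NS))
  + xi * ((1 - eta ^ 2) ^ 2 + eta ^ 4)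
      / ((1 - eta ^ 2) * (1 + 2 * xi * NS * eta ^ 2 * (1 - eta ^ 2))) ).

Definition f1 (eta NS : R) : R :=
  / (4 * NS) * Derive (fun xi => QFI eta NS xi) 1.

Definition one_is_maximizer (eta NS : R) : Prop :=
  forall xi, 0 <= xi <= 1 -> QFI eta NS xi <= QFI eta NS 1.

(* Nb is the threshold \bar N_S(eta): 0 if eta <= 1/sqrt 2, else a
   zero of N |-> f1 eta N on (0, oo) (unique by the first conjunct of the theorem). *)
Definition Nbar_spec (eta Nb : R) : Prop :=
  (eta <= / sqrt 2 /\ Nb = 0) \/
  (/ sqrt 2 < eta /\ 0 < Nb /\ f1 eta Nb = 0).

(* Main.v *)
Require Import Defs.
From Stdlib Require Import Reals Lra Psatz.
From Coquelicot Require Import Coquelicot.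
Open Scope R_scope.

Definition Dn (eta x : R) := 1 - 2 * eta^2 * (sqrt (x * (1 + x)) - x).
Definition Fc (eta N : R) :=
  ((1 - eta^2)^2 + eta^4) / ((1 - eta^2) * (1 + 2*N*eta^2*(1-eta^2))^2) - / Dn eta N.

Lemma sqrt_bounds x : 0 <= x -> x <= sqrt (x * (1 + x)) < x + / 2.
Proof.
  intros Hx. split.
  - rewrite <- (sqrt_pow2 x Hx) at 1. apply sqrt_le_1_alt. nra.
  - rewrite <- (sqrt_pow2 (x + /2)) by lra. apply sqrt_lt_1_alt. nra.
Qed.

Lemma Dn_bounds eta x : 0 < eta < 1 -> 0 <= x -> 1 - eta^2 < Dn eta x <= 1.
Proof.
  intros He Hx. destruct (sqrt_bounds x Hx). unfold Dn.
  assert (0 < eta^2) by nra. split; nra.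
Qed.

Lemma s_mono x y : 0 <= x <= y -> sqrt (x * (1 + x)) - x <= sqrt (y * (1 + y)) - y.
Proof.
  intros Hxy. destruct (sqrt_bounds x) as [H1 H2]; [lra|].
  assert (Ha2 : sqrt (x * (1 + x)) ^ 2 = x * (1 + x)).
  { rewrite <- Rsqr_pow2. apply Rsqr_sqrt. nra. }
  set (a := sqrt (x * (1 + x))) in *.
  assert (a + (y - x) <= sqrt (y * (1 + y))).
  { rewrite <- (sqrt_pow2 (a + (y - x))) by lra. apply sqrt_le_1_alt. nra. }
  lra.
Qed.

Lemma Dn_mono eta x y : 0 < eta < 1 -> 0 <= x <= y -> Dn eta y <= Dn eta x.
Proof.
  intros He H. pose proof (s_mono x y H). unfold Dn.
  assert (0 < eta^2) by nra. nra.
Qed.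

Lemma deriv_QFI eta N : 0 < eta < 1 -> 0 < N ->
  is_derive (QFI eta N) 1 (4 * N * Fc eta N).
Proof.
  intros He HN. pose proof (Dn_bounds eta N He (Rlt_le _ _ HN)) as HD.
  assert (Hs : 0 < sqrt (1 * N * (1 + 1 * N))) by (apply sqrt_lt_R0; nra).
  assert (HDe : 1 - 2 * eta^2 * (sqrt (1 * N * (1 + 1 * N)) - 1 * N) = Dn eta N).
  { unfold Dn. now rewrite !Rmult_1_l. }
  assert (Hc : 0 < 1 - eta^2) by nra.
  assert (Hu : 0 < 1 + 2 * N * eta^2 * (1 - eta^2)).
  { assert (0 < eta^2) by nra. assert (0 < N * eta^2) by nra. nra. }
  unfold QFI. auto_derive.
  - repeat split.
    + nra.
    + replace (1 + - (2 * (eta * (eta * 1)) * (sqrt (1 * N * (1 + 1 * N)) + - (1 * N))))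
        with (Dn eta N) by (rewrite <- HDe; ring). lra.
    + replace ((1 - eta * (eta * 1)) * (1 + 2 * 1 * N * (eta * (eta * 1)) * (1 - eta * (eta * 1))))
      with ((1 - eta^2) * (1 + 2 * N * eta^2 * (1 - eta^2))) by ring.
      apply Rgt_not_eq. nra.
  - replace (1 + - (2 * (eta * (eta * 1)) * (sqrt (1 * N * (1 + 1 * N)) + - (1 * N))))
        with (Dn eta N) by (rewrite <- HDe; ring).
    unfold Fc. field. repeat split; try lra.
Qed.
Lemma f1_Fc eta N : 0 < eta < 1 -> 0 < N -> f1 eta N = Fc eta N.
Proof.
  intros He HN. unfold f1. erewrite is_derive_unique by (exact (deriv_QFI eta N He HN)).
  field. lra.
Qed.

Lemma Fc_dec eta a b : 0 < eta < 1 -> 0 <= a < b -> Fc eta b < Fc eta a.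
Proof.
  intros He Hab. pose proof (Dn_mono eta a b He (conj (proj1 Hab) (Rlt_le _ _ (proj2 Hab)))).
  pose proof (Dn_bounds eta b He ltac:(lra)).
  assert (Hc : 0 < 1 - eta^2) by nra. assert (He2 : 0 < eta^2) by nra.
  set (k := 2 * eta^2 * (1 - eta^2)).
  assert (Hk : 0 < k) by (unfold k; nra).
  assert (/ Dn eta a <= / Dn eta b) by (apply Rinv_le_contravar; lra).
  assert (HA : 0 < (1 - eta^2)^2 + eta^4) by nra.
  unfold Fc.
  replace (1 + 2 * a * eta ^ 2 * (1 - eta ^ 2)) with (1 + k * a) by (unfold k; ring).
  replace (1 + 2 * b * eta ^ 2 * (1 - eta ^ 2)) with (1 + k * b) by (unfold k; ring).
  assert (((1 - eta^2)^2 + eta^4) / ((1 - eta^2) * (1 + k * b)^2) <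
          ((1 - eta^2)^2 + eta^4) / ((1 - eta^2) * (1 + k * a)^2)).
  { unfold Rdiv. apply Rmult_lt_compat_l; [lra|]. apply Rinv_lt_contravar.
    - assert (0 < 1 + k * a) by nra. assert (0 < 1 + k*b) by nra.
      apply Rmult_lt_0_compat; apply Rmult_lt_0_compat; nra.
    - apply Rmult_lt_compat_l; [lra|]. assert (0 <= k * a) by nra. assert (k*a < k*b) by nra. nra. }
  lra.
Qed.

Lemma Fc0 eta : 0 < eta < 1 -> Fc eta 0 = eta^2 * (2 * eta^2 - 1) / (1 - eta^2).
Proof.
  intros He. unfold Fc, Dn. replace (0 * (1 + 0)) with 0 by ring. rewrite sqrt_0.
  field. nra.
Qed.

Lemma max_iff eta N : 0 < eta < 1 -> 0 < N -> (one_is_maximizer eta N <-> 0 <= Fc eta N).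
Proof.
  intros He HN. assert (Hc : 0 < 1 - eta^2) by nra. assert (He2 : 0 < eta^2) by nra.
  split.
  - intros Hm. destruct (Rle_or_lt 0 (Fc eta N)) as [|Hneg]; [assumption|exfalso].
    pose proof (deriv_QFI eta N He HN) as Hd. apply is_derive_Reals in Hd.
    set (l := 4 * N * Fc eta N) in *. assert (Hl : l < 0) by (unfold l; nra).
    assert (Heps : 0 < - l / 2) by lra.
    destruct (Hd (mkposreal _ Heps) Heps) as [d Hdel].
    set (h := - Rmin (d / 2) (/ 2)).
    assert (Hmin1 : Rmin (d/2) (/2) <= d/2) by apply Rmin_l.
    assert (Hmin2 : Rmin (d/2) (/2) <= /2) by apply Rmin_r.
    assert (Hmin3 : 0 < Rmin (d/2) (/2)) by (apply Rmin_pos; [destruct d; simpl; lra | lra]).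
    assert (Hh0 : h <> 0) by (unfold h; lra).
    assert (Hhd : Rabs h < d) by (unfold h; rewrite Rabs_Ropp, Rabs_pos_eq by lra; destruct d; simpl in *; lra).
    specialize (Hdel h Hh0 Hhd).
    specialize (Hm (1 + h) ltac:(unfold h; lra)).
    apply Rabs_def2 in Hdel. destruct Hdel as [Hd1 Hd2].
    simpl in Hd1, Hd2.
    assert (Hq : (QFI eta N (1 + h) - QFI eta N 1) / h < 0) by lra.
    assert (Hhn : h < 0) by (unfold h; lra).
    assert (0 <= (QFI eta N (1 + h) - QFI eta N 1) / h).
    { unfold Rdiv. replace (QFI eta N (1 + h) - QFI eta N 1) with (- (QFI eta N 1 - QFI eta N (1+h))) by ring.
      replace (/ h) with (- / - h) by (field; lra).
      assert (0 < / - h) by (apply Rinv_0_lt_compat; lra). nra. }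
    lra.
  - intros HF xi Hxi.
    assert (Hx : 0 <= xi * N) by nra.
    pose proof (Dn_mono eta (xi * N) N He ltac:(nra)) as HDm.
    pose proof (Dn_bounds eta N He ltac:(lra)) as HDN.
    assert (HDx : / Dn eta (xi * N) <= / Dn eta N) by (apply Rinv_le_contravar; lra).
    set (A := (1 - eta^2)^2 + eta^4). assert (HA : 0 < A) by (unfold A; nra).
    set (k := 2 * eta^2 * (1 - eta^2)).
    assert (Hk : 0 < k) by (unfold k; nra).
    set (u := 1 + k * N). set (v := 1 + k * (xi * N)).
    assert (Hu : 1 < u) by (unfold u; nra).
    assert (Hv : 1 <= v) by (unfold v; nra).
    assert (HF' : / Dn eta N <= A / ((1 - eta^2) * u^2)).
    { unfold Fc in HF. fold A in HF.
      replace (1 + 2 * N * eta ^ 2 * (1 - eta ^ 2)) with u in HF by (unfold u, k; ring). lra. }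
    assert (E1 : QFI eta N xi = 4 * N * ((1 - xi) * / Dn eta (xi * N) + xi * (A / ((1 - eta^2) * v)))).
    { unfold QFI, Dn, A, v, k.
      replace (1 + 2 * xi * N * eta ^ 2 * (1 - eta ^ 2)) with (1 + 2 * eta ^ 2 * (1 - eta ^ 2) * (xi * N)) by ring.
      unfold Rdiv. ring. }
    assert (E2 : QFI eta N 1 = 4 * N * (A / ((1 - eta^2) * u))).
    { unfold QFI. replace (1 + 2 * 1 * N * eta ^ 2 * (1 - eta ^ 2)) with u by (unfold u, k; ring).
      unfold A, Rdiv. ring. }
    rewrite E1, E2. apply Rmult_le_compat_l; [lra|].
    assert (Hcv : 0 < (1 - eta^2) * v) by nra.
    assert (Hcu : 0 < (1 - eta^2) * u) by nra.
    assert (Key : (1 - xi) * (A / ((1 - eta ^ 2) * u ^ 2)) + xi * (A / ((1 - eta ^ 2) * v)) <= A / ((1 - eta ^ 2) * u)).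
    { assert (Hv' : v = 1 - xi + xi * u) by (unfold v, u; ring).
      assert (Hid : A / ((1 - eta ^ 2) * u) - ((1 - xi) * (A / ((1 - eta ^ 2) * u ^ 2)) + xi * (A / ((1 - eta ^ 2) * v)))
                = A / ((1 - eta^2) * u^2 * v) * ((1 - xi)^2 * (u - 1))).
      { rewrite Hv'. field. rewrite <- Hv'. repeat split; nra. }
      assert (0 <= A / ((1 - eta^2) * u^2 * v) * ((1 - xi)^2 * (u - 1))).
      { apply Rmult_le_pos.
        - unfold Rdiv. apply Rmult_le_pos; [lra|]. left. apply Rinv_0_lt_compat.
          apply Rmult_lt_0_compat; [|lra]. apply Rmult_lt_0_compat; nra.
        - apply Rmult_le_pos; [nra|lra]. }
      lra. }
    assert ((1 - xi) * / Dn eta (xi * N) <= (1 - xi) * (A / ((1 - eta ^ 2) * u ^ 2))).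
    { apply Rmult_le_compat_l; lra. }
    lra.
Qed.
Lemma Fc_cont eta a : 0 < eta < 1 -> 0 <= a -> continuity_pt (fun t => - Fc eta t) a.
Proof.
  intros He Ha. apply continuity_pt_filterlim.
  assert (Hc : 0 < 1 - eta^2) by nra.
  pose proof (Dn_bounds eta a He Ha).
  apply (continuous_opp (fun t => Fc eta t)).
  unfold Fc.
  apply (continuous_minus (fun t => ((1 - eta ^ 2) ^ 2 + eta ^ 4) / ((1 - eta ^ 2) * (1 + 2 * t * eta ^ 2 * (1 - eta ^ 2)) ^ 2)) (fun t => / Dn eta t)).
  - apply ex_derive_continuous. auto_derive.
    assert (0 < eta^2) by nra. assert (0 <= a * eta^2) by nra.
    assert (0 < 1 + 2 * a * eta ^ 2 * (1 - eta ^ 2)) by nra.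
    apply Rgt_not_eq. replace ((1 - eta * (eta * 1)) * ((1 + 2 * a * (eta * (eta * 1)) * (1 - eta * (eta * 1))) * ((1 + 2 * a * (eta * (eta * 1)) * (1 - eta * (eta * 1))) * 1)))
     with ((1 - eta ^ 2) * ((1 + 2 * a * eta ^ 2 * (1 - eta ^ 2)) * (1 + 2 * a * eta ^ 2 * (1 - eta ^ 2)))) by ring.
    apply Rmult_lt_0_compat; nra.
  - apply continuous_Rinv_comp; [|lra].
    unfold Dn.
    apply (continuous_minus (fun _ => 1) (fun t => 2 * eta ^ 2 * (sqrt (t * (1 + t)) - t))).
    + apply continuous_const.
    + apply (continuous_mult (fun _ => 2 * eta ^ 2) (fun t => sqrt (t * (1 + t)) - t)).
      * apply continuous_const.
      * apply (continuous_minus (fun t => sqrt (t * (1 + t))) (fun t => t)).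
        -- apply continuous_sqrt_comp. apply (ex_derive_continuous (fun t : R => t * (1 + t))). auto_derive. easy.
        -- apply continuous_id.
Qed.
Lemma sqrt2_iff eta : 0 < eta -> (/ sqrt 2 < eta <-> / 2 < eta ^ 2).
Proof.
  intros He. assert (Hs : 0 < sqrt 2) by (apply sqrt_lt_R0; lra).
  assert (Hss : sqrt 2 * sqrt 2 = 2) by (apply sqrt_sqrt; lra).
  assert (Hi : / sqrt 2 = sqrt 2 / 2) by (apply (Rmult_eq_reg_l (sqrt 2)); [rewrite Rinv_r by lra; unfold Rdiv; rewrite <- Rmult_assoc, Hss; field | lra]).
  rewrite Hi. set (s := sqrt 2) in *. split; intros; nra.
Qed.

Theorem proposition1 (eta : R) :
  0 < eta < 1 ->
  (/ sqrt 2 < eta -> exists! N0 : R, 0 < N0 /\ f1 eta N0 = 0) /\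
  (forall Nb : R, Nbar_spec eta Nb ->
     forall NS : R, 0 < NS -> (one_is_maximizer eta NS <-> NS <= Nb)).
Proof.
  intros He. assert (Hc : 0 < 1 - eta^2) by nra. assert (He2 : 0 < eta^2) by nra.
  split.
  - intros Hgt. apply sqrt2_iff in Hgt; [|lra].
    set (M := / (2 * eta^2 * (1 - eta^2)^2)).
    assert (HM : 0 < M) by (unfold M; apply Rinv_0_lt_compat; apply Rmult_lt_0_compat; [lra|apply pow_lt; lra]).
    assert (HF0 : - Fc eta 0 < 0).
    { rewrite Fc0 by lra. assert (0 < eta ^ 2 * (2 * eta ^ 2 - 1) / (1 - eta ^ 2)).
      { unfold Rdiv. apply Rmult_lt_0_compat; [nra|]. apply Rinv_0_lt_compat; lra. }
      lra. }
    assert (HFM : 0 < - Fc eta M).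
    { unfold Fc. pose proof (Dn_bounds eta M He ltac:(lra)).
      assert (1 <= / Dn eta M).
      { rewrite <- Rinv_1. apply Rinv_le_contravar; lra. }
      assert (Hu : 1 + 2 * M * eta ^ 2 * (1 - eta ^ 2) = 1 + / (1 - eta^2)).
      { unfold M. field. lra. }
      rewrite Hu.
      assert (Hi : 1 < / (1 - eta^2)).
      { rewrite <- Rinv_1. apply Rinv_lt_contravar; nra. }
      set (w := / (1 - eta^2)) in *.
      assert (((1 - eta ^ 2) ^ 2 + eta ^ 4) / ((1 - eta ^ 2) * (1 + w) ^ 2) < 1).
      { apply Rmult_lt_reg_r with ((1 - eta ^ 2) * (1 + w) ^ 2).
        - apply Rmult_lt_0_compat; nra.
        - unfold Rdiv. rewrite Rmult_assoc, Rinv_l, Rmult_1_r, Rmult_1_l.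
          + assert ((1 - eta^2) * w = 1) by (unfold w; field; lra). nra.
          + apply Rgt_not_eq. apply Rmult_lt_0_compat; nra. }
      lra. }
    destruct (Ranalysis5.IVT_interv (fun t => - Fc eta t) 0 M
                (fun t Ht => Fc_cont eta t He (proj1 Ht)) HM HF0 HFM) as [z [Hz Hfz]].
    assert (Hz0 : 0 < z).
    { destruct (proj1 Hz) as [|<-]; [assumption|]. lra. }
    exists z. split.
    + split; [assumption|]. rewrite f1_Fc by lra. lra.
    + intros y [Hy Hfy]. rewrite f1_Fc in Hfy by lra.
      destruct (Rtotal_order z y) as [Hl|[Heq|Hl]]; [|assumption|].
      * pose proof (Fc_dec eta z y He ltac:(lra)). lra.
      * pose proof (Fc_dec eta y z He ltac:(lra)). lra.
  - intros Nb Hspec NS HN. rewrite max_iff by lra.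
    destruct Hspec as [[Hle HNb0]|[Hgt [HNb Hf]]]; [rewrite HNb0|].
    + split; [|lra]. intros HF. exfalso.
      assert (eta ^ 2 <= / 2).
      { destruct (Rle_or_lt (eta^2) (/2)) as [|Hx]; [assumption|].
        apply (sqrt2_iff eta) in Hx; lra. }
      pose proof (Fc_dec eta 0 NS He ltac:(lra)).
      rewrite Fc0 in H0 by lra.
      assert (eta ^ 2 * (2 * eta ^ 2 - 1) / (1 - eta ^ 2) <= 0).
      { unfold Rdiv. apply Rmult_le_0_r; [nra|]. left. apply Rinv_0_lt_compat; lra. }
      lra.
    + rewrite f1_Fc in Hf by lra. split.
      * intros HF. destruct (Rle_or_lt NS Nb); [assumption|].
        pose proof (Fc_dec eta Nb NS He ltac:(lra)). lra.
      * intros Hle. destruct Hle as [Hlt| ->]; [|lra].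
        pose proof (Fc_dec eta NS Nb He ltac:(lra)). lra.
Qed.
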